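(* Let $\eta\in\mathbb{C}$, $M\ge 1$, and let $T^\alpha_\beta(u)=\sum_{m=0}^M u^m T^\alpha_{\beta,m}$ ($\alpha,\beta\in\{1,2,3\}$) be operator-valued polynomials acting on a linear space $W$ whose coefficients satisfy, for all $u,v$ and all indices, $$(u-v)T^{\alpha_1}_{\beta_1}(u)T^{\alpha_2}_{\beta_2}(v)+\eta\, T^{\alpha_2}_{\beta_1}(u)T^{\alpha_1}_{\beta_2}(v)=(u-v)T^{\alpha_2}_{\beta_2}(v)T^{\alpha_1}_{\beta_1}(u)+\eta\, T^{\alpha_2}_{\beta_1}(v)T^{\alpha_1}_{\beta_2}(u).$$ Let $U(u)$ be the matrix of quantum minors defined in the context, and for a complex parameter $c$ put $$B_c(u)=T^{2}_{3}(u)\,U^{3}_{1}(u-c)-T^{1}_{3}(u)\,U^{3}_{2}(u-c).$$ Then for every $c$ the operators $B_c(u)$ form a commutative family: $[B_c(u),B_c(v)]=0$ for all $u,v$.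
   Context: For $\alpha_1<\alpha_2$, $\beta_1<\beta_2$ the quantum minor is $T^{\alpha_1\alpha_2}_{\beta_1\beta_2}(u)=T^{\alpha_1}_{\beta_1}(u)T^{\alpha_2}_{\beta_2}(u+\eta)-T^{\alpha_2}_{\beta_1}(u)T^{\alpha_1}_{\beta_2}(u+\eta)$. The $3\times 3$ matrix $U(u)=(U^\alpha_\beta(u))$ is $$U(u)=\begin{pmatrix} T^{23}_{23}(u) & -T^{23}_{13}(u) & T^{23}_{12}(u)\\ -T^{13}_{23}(u) & T^{13}_{13}(u) & -T^{13}_{12}(u)\\ T^{12}_{23}(u) & -T^{12}_{13}(u) & T^{12}_{12}(u)\end{pmatrix},$$ so in particular $U^3_1(u)=T^{12}_{23}(u)$ and $U^3_2(u)=-T^{12}_{13}(u)$. *)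

(* Defs.v *)
(* Complex numbers are modelled as R[i] = complex R for an
   arbitrary R : realType (every realType is a copy of the real numbers). *)
From HB Require Import structures.
From mathcomp Require Import all_boot all_order all_algebra.
From mathcomp Require Import complex.
From mathcomp Require Import reals.
Set Implicit Arguments. Unset Strict Implicit. Unset Printing Implicit Defensive.
Import Order.TTheory GRing.Theory Num.Theory.
Local Open Scope ring_scope.

(* Indices alpha, beta in {1,2,3} are represented by 'I_3 = {0,1,2};
   paper index k corresponds to ordinal k-1. *)
Definition i1 : 'I_3 := @Ordinal 3 0 isT.
Definition i2 : 'I_3 := @Ordinal 3 1 isT.
Definition i3 : 'I_3 := @Ordinal 3 2 isT.

Section Ops.
Variables (R : realType) (W : lmodType R[i]) (M : nat).
Variable Tc : 'I_3 -> 'I_3 -> 'I_M.+1 -> {linear W -> W}.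
Variable eta : R[i].

Definition Tu (a b : 'I_3) (u : R[i]) : W -> W :=
  fun w => \sum_(m < M.+1) (u ^+ m) *: Tc a b m w.

Definition qminor (a1 a2 b1 b2 : 'I_3) (u : R[i]) : W -> W :=
  fun w => Tu a1 b1 u (Tu a2 b2 (u + eta) w) - Tu a2 b1 u (Tu a1 b2 (u + eta) w).

Definition Umx (a b : 'I_3) (u : R[i]) : W -> W :=
  fun w =>
  match nat_of_ord a, nat_of_ord b with
  | 0, 0 => qminor i2 i3 i2 i3 u w
  | 0, 1 => - qminor i2 i3 i1 i3 u w
  | 0, _ => qminor i2 i3 i1 i2 u w
  | 1, 0 => - qminor i1 i3 i2 i3 u w
  | 1, 1 => qminor i1 i3 i1 i3 u w
  | 1, _ => - qminor i1 i3 i1 i2 u w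
  | _, 0 => qminor i1 i2 i2 i3 u w
  | _, 1 => - qminor i1 i2 i1 i3 u w
  | _, _ => qminor i1 i2 i1 i2 u w
  end.

Definition Bc (c u : R[i]) : W -> W :=
  fun w => Tu i2 i3 u (Umx i3 i1 (u - c) w) - Tu i1 i3 u (Umx i3 i2 (u - c) w).

End Ops.

(* Main.v *)
Require Import Defs.
From HB Require Import structures.
From mathcomp Require Import all_boot all_order all_algebra.
From mathcomp Require Import complex.
From mathcomp Require Import reals.
From mathcomp Require Import ring.
Import Order.TTheory GRing.Theory Num.Theory.
Local Open Scope ring_scope.
Set Implicit Arguments. Unset Strict Implicit. Unset Printing Implicit Defensive.
Section Refl.
Variables (K : comNzRingType) (V : lmodType K).
Inductive mexp := MA of nat | MP of mexp & mexp | MN of mexp | MS of K & mexp | M0.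
Fixpoint mint (env : seq V) (e : mexp) : V :=
  match e with
  | MA n => nth 0 env n
  | MP a b => mint env a + mint env b
  | MN a => - mint env a
  | MS s a => s *: mint env a
  | M0 => 0
  end.
Fixpoint mco (e : mexp) (j : nat) : K :=
  match e with
  | MA n => if Nat.eqb n j then 1 else 0
  | MP a b => mco a j + mco b j
  | MN a => - mco a j
  | MS s a => s * mco a j
  | M0 => 0
  end.
Fixpoint mallP (f : nat -> Prop) (n : nat) : Prop :=
  match n with 0 => True | S n => mallP f n /\ f n end.
Lemma allP_spec f n : mallP f n -> forall j, (j < n)%N -> f j.
Proof.
elim: n => [//|n IH] /= [H1 H2] j; rewrite ltnS leq_eqVlt => /orP[/eqP->//|].
exact: IH.
Qed.
Lemma mint_sum env e : mint env e = \sum_(j < size env) mco e j *: nth 0 env j.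
Proof.
elim: e => [n|a IHa b IHb|a IHa|s a IHa|] /=.
- case: (ltnP n (size env)) => Hn.
  + rewrite (bigD1 (Ordinal Hn)) //= PeanoNat.Nat.eqb_refl scale1r big1 ?addr0 //.
    move=> i /eqP Hi; case: PeanoNat.Nat.eqb_spec => [E|]; last by rewrite scale0r.
    by exfalso; apply: Hi; apply: val_inj => /=.
  + rewrite nth_default // big1 // => i _.
    case: PeanoNat.Nat.eqb_spec => [E|]; last by rewrite scale0r.
    by move: (ltn_ord i); rewrite -E ltnNge Hn.
- by rewrite IHa IHb -big_split /=; apply: eq_bigr => i _; rewrite scalerDl.
- by rewrite IHa -sumrN; apply: eq_bigr => i _; rewrite scaleNr.
- by rewrite IHa scaler_sumr; apply: eq_bigr => i _; rewrite scalerA.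
- by rewrite big1 // => i _; rewrite scale0r.
Qed.
Lemma mint_eq env e1 e2 :
  mallP (fun j => mco e1 j = mco e2 j) (size env) -> mint env e1 = mint env e2.
Proof.
move/allP_spec => H; rewrite !mint_sum; apply: eq_bigr => i _.
by rewrite H.
Qed.
End Refl.

Ltac inlist x l :=
  match l with
  | ?y :: ?l' => first [constr_eq x y | inlist x l']
  end.
Ltac collect t acc :=
  lazymatch t with
  | (?a + ?b)%R => let acc := collect a acc in collect b acc
  | (- ?a)%R => collect a acc
  | (?s *: ?a)%R => collect a acc
  | 0%R => acc
  | _ => match acc with
         | _ => let _ := match goal with _ => inlist t acc end in acc
         | _ => constr:(t :: acc)
         end
  end.
Ltac lookup x l :=
  lazymatch l with
  | ?y :: ?l' => match constr:(tt) with
                 | _ => let _ := match goal with _ => constr_eq x y end in constr:(O)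
                 | _ => let n := lookup x l' in constr:(S n)
                 end
  end.
Ltac reify K t env :=
  lazymatch t with
  | (?a + ?b)%R => let ea := reify K a env in let eb := reify K b env in constr:(MP ea eb)
  | (- ?a)%R => let ea := reify K a env in constr:(MN ea)
  | (?s *: ?a)%R => let ea := reify K a env in constr:(MS s ea)
  | 0%R => constr:(@M0 K)
  | _ => let n := lookup t env in constr:(@MA K n)
  end.
Ltac mod_solve K :=
  lazymatch goal with
  | |- @eq ?V ?L ?R =>
    let env := collect L (@nil V) in
    let env := collect R env in
    let e1 := reify K L env in
    let e2 := reify K R env in
    change (mint env e1 = mint env e2);
    apply: mint_eq; cbn [mallP mco size Nat.eqb]; repeat match goal with x := _ |- _ => subst x end; repeat split; ring
  end.


Section Dens.
Variables (K : numFieldType) (V : lmodType K).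

Definition VPn (n : nat) (f : K -> V) :=
  exists a : nat -> V, forall u, f u = \sum_(k < n) u ^+ k *: a k.
Definition VP (f : K -> V) := exists n, VPn n f.

Lemma VPn_ext n f g : VPn n f -> (forall u, f u = g u) -> VPn n g.
Proof. by move=> [a Ha] E; exists a => u; rewrite -E. Qed.
Lemma VP_ext f g : VP f -> (forall u, f u = g u) -> VP g.
Proof. by move=> [n Hn] E; exists n; apply: VPn_ext Hn E. Qed.

Lemma VPn0 n : VPn n (fun _ => 0).
Proof. by exists (fun _ => 0) => u; rewrite big1 // => k _; rewrite scaler0. Qed.

Lemma VPn_widen n f : VPn n f -> VPn n.+1 f.
Proof.
move=> [a Ha]; exists (fun k => if (k < n)%N then a k else 0) => u.
rewrite Ha big_ord_recr /= ltnn scaler0 addr0.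
by apply: eq_bigr => k _; rewrite ltn_ord.
Qed.
Lemma VPn_widen_le n m f : (n <= m)%N -> VPn n f -> VPn m f.
Proof.
move=> /subnK <-; elim: (m - n)%N => [//|k IH] H.
by rewrite addSn; apply: VPn_widen; apply: IH.
Qed.

Lemma VPn_add n f g : VPn n f -> VPn n g -> VPn n (fun u => f u + g u).
Proof.
move=> [a Ha] [b Hb]; exists (fun k => a k + b k) => u.
by rewrite Ha Hb -big_split; apply: eq_bigr => k _; rewrite scalerDr.
Qed.
Lemma VPn_scale n (s : K) f : VPn n f -> VPn n (fun u => s *: f u).
Proof.
move=> [a Ha]; exists (fun k => s *: a k) => u.
by rewrite Ha scaler_sumr; apply: eq_bigr => k _; rewrite !scalerA mulrC.
Qed.
Lemma VPn_div n f x0 : VPn n.+1 f ->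
  exists g, VPn n g /\ forall u, f u - f x0 = (u - x0) *: g u.
Proof.
elim: n f => [|n IH] f [a Ha].
  exists (fun _ => 0); split; first exact: VPn0.
  by move=> u; rewrite !Ha !big_ord1 !expr0 subrr scaler0.
pose h u := \sum_(k < n.+1) u ^+ k *: a k.+1.
have Hf : forall u, f u = a 0%N + u *: h u.
  move=> u; rewrite Ha big_ord_recl expr0 scale1r /h scaler_sumr; congr (_ + _).
  by apply: eq_bigr => k _; rewrite /bump /= exprS scalerA.
have Hh : VPn n.+1 h by exists (fun k => a k.+1).
have [g' [Hg' Eg']] := IH h Hh.
exists (fun u => h u + x0 *: g' u); split.
  apply: VPn_add; first exact: Hh.
  by apply: VPn_scale; apply: VPn_widen.
move=> u; rewrite !Hf scalerDr scalerA mulrC -scalerA -Eg'.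
rewrite scalerBr !scalerBl; set A := u *: h u; set B := x0 *: h u; set C := x0 *: h x0.
by rewrite addrAC opprD addrA subrr add0r addrC addrA subrK addrC.
Qed.

Lemma exists_notin (bad : seq K) : exists x : K, x \notin bad.
Proof.
pose s := [seq (k%:R : K) | k <- iota 0 (size bad).+1].
have us : uniq s.
  rewrite map_inj_uniq ?iota_uniq // => m n /eqP; rewrite eqr_nat => /eqP.
  done.
case: (boolP (all (fun x => x \in bad) s)) => [/allP sub|].
  have := uniq_leq_size us sub.
  by rewrite size_map size_iota ltnn.
by move=> /allPn [x _ hx]; exists x.
Qed.

Lemma VPn_zero n f (bad : seq K) : VPn n f -> (forall u, u \notin bad -> f u = 0) ->
  forall u, f u = 0.
Proof.
elim: n f bad => [|n IH] f bad.
  by move=> [a Ha] _ u; rewrite Ha big_ord0.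
move=> Hf Hz.
have [x0 hx0] := exists_notin bad.
have [g [Hg Eg]] := VPn_div x0 Hf.
have g0 : forall u, g u = 0.
  apply: (IH g (x0 :: bad) Hg) => u; rewrite inE negb_or => /andP[hu1 hu2].
  have := Eg u; rewrite (Hz u hu2) (Hz x0 hx0) subrr => /esym/eqP.
  by rewrite scaler_eq0 subr_eq0 (negbTE hu1) /= => /eqP.
move=> u; have := Eg u; rewrite g0 scaler0 (Hz x0 hx0) subr0.
by [].
Qed.

Lemma VP_add f g : VP f -> VP g -> VP (fun u => f u + g u).
Proof.
move=> [n Hn] [m Hm]; exists (maxn n m); apply: VPn_add.
  by apply: VPn_widen_le Hn; rewrite leq_maxl.
by apply: VPn_widen_le Hm; rewrite leq_maxr.
Qed.
Lemma VP_scale (s : K) f : VP f -> VP (fun u => s *: f u).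
Proof. by move=> [n Hn]; exists n; apply: VPn_scale. Qed.
Lemma VP_opp f : VP f -> VP (fun u => - f u).
Proof. by move=> H; apply: VP_ext (VP_scale (-1) H) _ => u; rewrite scaleN1r. Qed.
Lemma VP_sub f g : VP f -> VP g -> VP (fun u => f u - g u).
Proof. by move=> Hf Hg; apply: VP_add Hf (VP_opp Hg). Qed.
Lemma VP_const (a : V) : VP (fun _ => a).
Proof. by exists 1%N; exists (fun _ => a) => u; rewrite big_ord1 expr0 scale1r. Qed.
Lemma VP_mulX f : VP f -> VP (fun u => u *: f u).
Proof.
move=> [n [a Ha]]; exists n.+1; exists (fun k => if k is k'.+1 then a k' else 0) => u.
rewrite big_ord_recl expr0 scaler0 add0r Ha scaler_sumr.
by apply: eq_bigr => k _; rewrite /bump /= exprS scalerA.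
Qed.
Lemma VP_lin (L : V -> V) f :
  (forall x y, L (x + y) = L x + L y) -> (forall (s : K) x, L (s *: x) = s *: L x) ->
  VP f -> VP (fun u => L (f u)).
Proof.
move=> LD LZ [n [a Ha]]; exists n; exists (fun k => L (a k)) => u.
have L0 : L 0 = 0 by have := LZ 0 0; rewrite !scale0r.
rewrite Ha; clear Ha; elim: n => [|n IH]; first by rewrite !big_ord0.
by rewrite !big_ord_recr /= LD LZ IH.
Qed.
Lemma VP_pow f (d : K) m : VP f -> VP (fun u => (u + d) ^+ m *: f u).
Proof.
move=> Hf; elim: m => [|m IH].
  by apply: VP_ext Hf _ => u; rewrite expr0 scale1r.
apply: VP_ext (VP_add (VP_mulX IH) (VP_scale d IH)) _ => u.
by rewrite exprS -scalerA scalerDl.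
Qed.
Lemma VP_sum N (F : nat -> K -> V) : (forall m, VP (F m)) ->
  VP (fun u => \sum_(m < N) F m u).
Proof.
move=> HF; elim: N => [|N IH].
  by apply: VP_ext (VP_const 0) _ => u; rewrite big_ord0.
by apply: VP_ext (VP_add IH (HF N)) _ => u; rewrite big_ord_recr.
Qed.
End Dens.

Lemma scale_cancel (K : fieldType) (V : lmodType K) (a : K) (x y : V) :
  a != 0 -> a *: (x - y) = 0 -> x = y.
Proof. by move=> Ha /eqP; rewrite scaler_eq0 (negbTE Ha) subr_eq0 => /eqP. Qed.

Section Main.
Variables (R : realType) (eta : R[i]) (M : nat) (W : lmodType R[i]).
Variable (Tc : 'I_3 -> 'I_3 -> 'I_M.+1 -> {linear W -> W}).
Hypothesis hRTT : forall (a1 a2 b1 b2 : 'I_3) (u v : R[i]) (w : W),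
     (u - v) *: Tu Tc a1 b1 u (Tu Tc a2 b2 v w)
       + eta *: Tu Tc a2 b1 u (Tu Tc a1 b2 v w)
     = (u - v) *: Tu Tc a2 b2 v (Tu Tc a1 b1 u w)
       + eta *: Tu Tc a2 b1 v (Tu Tc a1 b2 u w).

Lemma TuD a b x v1 v2 : Tu Tc a b x (v1 + v2) = Tu Tc a b x v1 + Tu Tc a b x v2.
Proof. by rewrite /Tu -big_split; apply: eq_bigr => m _; rewrite linearD scalerDr. Qed.
Lemma TuZ a b x (s : R[i]) v : Tu Tc a b x (s *: v) = s *: Tu Tc a b x v.
Proof.
by rewrite /Tu scaler_sumr; apply: eq_bigr => m _; rewrite linearZ /= !scalerA mulrC.
Qed.
Lemma TuN a b x v : Tu Tc a b x (- v) = - Tu Tc a b x v.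
Proof. by rewrite -scaleN1r TuZ scaleN1r. Qed.
Lemma Tu0 a b x : Tu Tc a b x 0 = 0.
Proof. by rewrite /Tu big1 // => m _; rewrite linear0 scaler0. Qed.

Lemma z1 (c : R[i]) (x y : W) : x = y -> c *: (x - y) = 0.
Proof. by move=> ->; rewrite subrr scaler0. Qed.
Lemma add00 (x y : W) : x = 0 -> y = 0 -> x + y = 0.
Proof. by move=> -> ->; rewrite addr0. Qed.

Lemma commC_11 u w z : u != w -> Tu Tc i1 i3 u (qminor Tc eta i1 i2 i1 i3 w z) = qminor Tc eta i1 i2 i1 i3 w (Tu Tc i1 i3 u z).
Proof.
move=> Huw.
have h1 := hRTT i1 i2 i3 i1 u w (Tu Tc i1 i3 (w + eta) z).
rewrite ?TuD ?TuZ in h1.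
have h2 := hRTT i2 i1 i1 i3 u w (Tu Tc i1 i3 (w + eta) z).
rewrite ?TuD ?TuZ in h2.
have h3 := hRTT i1 i1 i1 i3 w u (Tu Tc i2 i3 (w + eta) z).
rewrite ?TuD ?TuZ in h3.
have h4 := hRTT i1 i2 i3 i3 w (w + eta) z.
move: h4 => /(congr1 (fun t => (Tu Tc i1 i1 u t))) h4.
rewrite ?TuD ?TuZ in h4.
have h5 := hRTT i1 i2 i3 i3 u (w + eta) z.
move: h5 => /(congr1 (fun t => (Tu Tc i1 i1 w t))) h5.
rewrite ?TuD ?TuZ in h5.
have h6 := hRTT i1 i2 i3 i1 w u (Tu Tc i1 i3 (w + eta) z).
rewrite ?TuD ?TuZ in h6.
have h7 := hRTT i1 i1 i3 i3 u (w + eta) z.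
move: h7 => /(congr1 (fun t => (Tu Tc i2 i1 w t))) h7.
rewrite ?TuD ?TuZ in h7.
apply: (@scale_cancel _ _ (u - w)); first by rewrite subr_eq0.
lazymatch type of h1 with ?L1 = ?R1 =>
lazymatch type of h2 with ?L2 = ?R2 =>
lazymatch type of h3 with ?L3 = ?R3 =>
lazymatch type of h4 with ?L4 = ?R4 =>
lazymatch type of h5 with ?L5 = ?R5 =>
lazymatch type of h6 with ?L6 = ?R6 =>
lazymatch type of h7 with ?L7 = ?R7 =>
  have E : (u - w) *: (Tu Tc i1 i3 u (qminor Tc eta i1 i2 i1 i3 w z) - qminor Tc eta i1 i2 i1 i3 w (Tu Tc i1 i3 u z)) = (- (1%:R)) *: (L1 - R1) + ((1%:R)) *: (L2 - R2) + ((1%:R)) *: (L3 - R3) + (- (1%:R)) *: (L4 - R4) + ((1%:R)) *: (L5 - R5) + (- (1%:R)) *: (L6 - R6) + (- (1%:R)) *: (L7 - R7);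
  [ by rewrite /qminor ?TuD ?TuN ?TuZ; set s0 := (w + eta); mod_solve R[i] | ]
 end end end end end end end.
apply: (etrans E); exact: (add00 (add00 (add00 (add00 (add00 (add00 (z1 _ h1) (z1 _ h2)) (z1 _ h3)) (z1 _ h4)) (z1 _ h5)) (z1 _ h6)) (z1 _ h7)).
Qed.

Lemma commC_12 u w z : u != w -> Tu Tc i1 i3 u (qminor Tc eta i1 i2 i2 i3 w z) = qminor Tc eta i1 i2 i2 i3 w (Tu Tc i1 i3 u z).
Proof.
move=> Huw.
have h1 := hRTT i1 i2 i3 i2 u w (Tu Tc i1 i3 (w + eta) z).
rewrite ?TuD ?TuZ in h1.
have h2 := hRTT i2 i1 i2 i3 u w (Tu Tc i1 i3 (w + eta) z).
rewrite ?TuD ?TuZ in h2.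
have h3 := hRTT i1 i1 i2 i3 w u (Tu Tc i2 i3 (w + eta) z).
rewrite ?TuD ?TuZ in h3.
have h4 := hRTT i1 i2 i3 i3 w (w + eta) z.
move: h4 => /(congr1 (fun t => (Tu Tc i1 i2 u t))) h4.
rewrite ?TuD ?TuZ in h4.
have h5 := hRTT i1 i2 i3 i3 u (w + eta) z.
move: h5 => /(congr1 (fun t => (Tu Tc i1 i2 w t))) h5.
rewrite ?TuD ?TuZ in h5.
have h6 := hRTT i1 i2 i3 i2 w u (Tu Tc i1 i3 (w + eta) z).
rewrite ?TuD ?TuZ in h6.
have h7 := hRTT i1 i1 i3 i3 u (w + eta) z.
move: h7 => /(congr1 (fun t => (Tu Tc i2 i2 w t))) h7.
rewrite ?TuD ?TuZ in h7.
apply: (@scale_cancel _ _ (u - w)); first by rewrite subr_eq0.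
lazymatch type of h1 with ?L1 = ?R1 =>
lazymatch type of h2 with ?L2 = ?R2 =>
lazymatch type of h3 with ?L3 = ?R3 =>
lazymatch type of h4 with ?L4 = ?R4 =>
lazymatch type of h5 with ?L5 = ?R5 =>
lazymatch type of h6 with ?L6 = ?R6 =>
lazymatch type of h7 with ?L7 = ?R7 =>
  have E : (u - w) *: (Tu Tc i1 i3 u (qminor Tc eta i1 i2 i2 i3 w z) - qminor Tc eta i1 i2 i2 i3 w (Tu Tc i1 i3 u z)) = (- (1%:R)) *: (L1 - R1) + ((1%:R)) *: (L2 - R2) + ((1%:R)) *: (L3 - R3) + (- (1%:R)) *: (L4 - R4) + ((1%:R)) *: (L5 - R5) + (- (1%:R)) *: (L6 - R6) + (- (1%:R)) *: (L7 - R7);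
  [ by rewrite /qminor ?TuD ?TuN ?TuZ; set s0 := (w + eta); mod_solve R[i] | ]
 end end end end end end end.
apply: (etrans E); exact: (add00 (add00 (add00 (add00 (add00 (add00 (z1 _ h1) (z1 _ h2)) (z1 _ h3)) (z1 _ h4)) (z1 _ h5)) (z1 _ h6)) (z1 _ h7)).
Qed.

Lemma commC_21 u w z : u != w -> Tu Tc i2 i3 u (qminor Tc eta i1 i2 i1 i3 w z) = qminor Tc eta i1 i2 i1 i3 w (Tu Tc i2 i3 u z).
Proof.
move=> Huw.
have h1 := hRTT i1 i2 i1 i3 w u (Tu Tc i2 i3 (w + eta) z).
rewrite ?TuD ?TuZ in h1.
have h2 := hRTT i1 i2 i3 i3 w (w + eta) z.
move: h2 => /(congr1 (fun t => (Tu Tc i2 i1 u t))) h2.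
rewrite ?TuD ?TuZ in h2.
have h3 := hRTT i2 i1 i3 i3 u (w + eta) z.
move: h3 => /(congr1 (fun t => (Tu Tc i2 i1 w t))) h3.
rewrite ?TuD ?TuZ in h3.
have h4 := hRTT i2 i2 i3 i3 u (w + eta) z.
move: h4 => /(congr1 (fun t => (Tu Tc i1 i1 w t))) h4.
rewrite ?TuD ?TuZ in h4.
have h5 := hRTT i2 i2 i1 i3 w u (Tu Tc i1 i3 (w + eta) z).
rewrite ?TuD ?TuZ in h5.
apply: (@scale_cancel _ _ (u - w)); first by rewrite subr_eq0.
lazymatch type of h1 with ?L1 = ?R1 =>
lazymatch type of h2 with ?L2 = ?R2 =>
lazymatch type of h3 with ?L3 = ?R3 =>
lazymatch type of h4 with ?L4 = ?R4 =>
lazymatch type of h5 with ?L5 = ?R5 =>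
  have E : (u - w) *: (Tu Tc i2 i3 u (qminor Tc eta i1 i2 i1 i3 w z) - qminor Tc eta i1 i2 i1 i3 w (Tu Tc i2 i3 u z)) = ((1%:R)) *: (L1 - R1) + (- (1%:R)) *: (L2 - R2) + (- (1%:R)) *: (L3 - R3) + ((1%:R)) *: (L4 - R4) + (- (1%:R)) *: (L5 - R5);
  [ by rewrite /qminor ?TuD ?TuN ?TuZ; set s0 := (w + eta); mod_solve R[i] | ]
 end end end end end.
apply: (etrans E); exact: (add00 (add00 (add00 (add00 (z1 _ h1) (z1 _ h2)) (z1 _ h3)) (z1 _ h4)) (z1 _ h5)).
Qed.

Lemma commC_22 u w z : u != w -> Tu Tc i2 i3 u (qminor Tc eta i1 i2 i2 i3 w z) = qminor Tc eta i1 i2 i2 i3 w (Tu Tc i2 i3 u z).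
Proof.
move=> Huw.
have h1 := hRTT i1 i2 i2 i3 w u (Tu Tc i2 i3 (w + eta) z).
rewrite ?TuD ?TuZ in h1.
have h2 := hRTT i1 i2 i3 i3 w (w + eta) z.
move: h2 => /(congr1 (fun t => (Tu Tc i2 i2 u t))) h2.
rewrite ?TuD ?TuZ in h2.
have h3 := hRTT i2 i1 i3 i3 u (w + eta) z.
move: h3 => /(congr1 (fun t => (Tu Tc i2 i2 w t))) h3.
rewrite ?TuD ?TuZ in h3.
have h4 := hRTT i2 i2 i3 i3 u (w + eta) z.
move: h4 => /(congr1 (fun t => (Tu Tc i1 i2 w t))) h4.
rewrite ?TuD ?TuZ in h4.
have h5 := hRTT i2 i2 i2 i3 w u (Tu Tc i1 i3 (w + eta) z).
rewrite ?TuD ?TuZ in h5.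
apply: (@scale_cancel _ _ (u - w)); first by rewrite subr_eq0.
lazymatch type of h1 with ?L1 = ?R1 =>
lazymatch type of h2 with ?L2 = ?R2 =>
lazymatch type of h3 with ?L3 = ?R3 =>
lazymatch type of h4 with ?L4 = ?R4 =>
lazymatch type of h5 with ?L5 = ?R5 =>
  have E : (u - w) *: (Tu Tc i2 i3 u (qminor Tc eta i1 i2 i2 i3 w z) - qminor Tc eta i1 i2 i2 i3 w (Tu Tc i2 i3 u z)) = ((1%:R)) *: (L1 - R1) + (- (1%:R)) *: (L2 - R2) + (- (1%:R)) *: (L3 - R3) + ((1%:R)) *: (L4 - R4) + (- (1%:R)) *: (L5 - R5);
  [ by rewrite /qminor ?TuD ?TuN ?TuZ; set s0 := (w + eta); mod_solve R[i] | ]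
 end end end end end.
apply: (etrans E); exact: (add00 (add00 (add00 (add00 (z1 _ h1) (z1 _ h2)) (z1 _ h3)) (z1 _ h4)) (z1 _ h5)).
Qed.

Lemma relBp_11 p q z : ((q - p) *: (Tu Tc i1 i1 p (qminor Tc eta i1 i2 i1 i3 q (Tu Tc i2 i3 (p + eta) z)) - Tu Tc i2 i1 p (qminor Tc eta i1 i2 i1 i3 q (Tu Tc i1 i3 (p + eta) z))) + eta *: (Tu Tc i1 i1 p (qminor Tc eta i1 i2 i1 i3 q (Tu Tc i2 i3 (p + eta) z)) - Tu Tc i2 i1 p (qminor Tc eta i1 i2 i1 i3 q (Tu Tc i1 i3 (p + eta) z)))) = ((q - p + eta) *: (Tu Tc i1 i1 q (qminor Tc eta i1 i2 i1 i3 p (Tu Tc i2 i3 (q + eta) z)) - Tu Tc i2 i1 q (qminor Tc eta i1 i2 i1 i3 p (Tu Tc i1 i3 (q + eta) z)))).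
Proof.
idtac.
have h1 := hRTT i1 i1 i1 i1 q p (Tu Tc i2 i3 (p + eta) (Tu Tc i2 i3 (q + eta) z)).
rewrite ?TuD ?TuZ in h1.
have h2 := hRTT i2 i2 i3 i3 (q + eta) (p + eta) z.
move: h2 => /(congr1 (fun t => (Tu Tc i1 i1 p (Tu Tc i1 i1 q t)))) h2.
rewrite ?TuD ?TuZ in h2.
have h3 := hRTT i2 i2 i1 i1 q p (Tu Tc i1 i3 (p + eta) (Tu Tc i1 i3 (q + eta) z)).
rewrite ?TuD ?TuZ in h3.
have h4 := hRTT i1 i1 i3 i3 (q + eta) (p + eta) z.
move: h4 => /(congr1 (fun t => (Tu Tc i2 i1 p (Tu Tc i2 i1 q t)))) h4.
rewrite ?TuD ?TuZ in h4.
have h5 := hRTT i2 i1 i1 i1 p q (Tu Tc i1 i3 (q + eta) (Tu Tc i2 i3 (p + eta) z)).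
rewrite ?TuD ?TuZ in h5.
have h6 := hRTT i1 i2 i3 i3 (p + eta) (q + eta) z.
move: h6 => /(congr1 (fun t => (Tu Tc i2 i1 p (Tu Tc i1 i1 q t)))) h6.
rewrite ?TuD ?TuZ in h6.
have h7 := hRTT i2 i1 i3 i3 (p + eta) (q + eta) z.
move: h7 => /(congr1 (fun t => (Tu Tc i1 i1 q (Tu Tc i2 i1 p t)))) h7.
rewrite ?TuD ?TuZ in h7.
have h8 := hRTT i1 i2 i1 i1 q p (Tu Tc i2 i3 (p + eta) (Tu Tc i1 i3 (q + eta) z)).
rewrite ?TuD ?TuZ in h8.
have h9 := hRTT i1 i2 i1 i1 p q (Tu Tc i2 i3 (p + eta) (Tu Tc i1 i3 (q + eta) z)).
rewrite ?TuD ?TuZ in h9.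
have h10 := hRTT i1 i2 i3 i3 (q + eta) (p + eta) z.
move: h10 => /(congr1 (fun t => (Tu Tc i2 i1 p (Tu Tc i1 i1 q t)))) h10.
rewrite ?TuD ?TuZ in h10.
have h11 := hRTT i2 i1 i1 i1 p q (Tu Tc i1 i3 (p + eta) (Tu Tc i2 i3 (q + eta) z)).
rewrite ?TuD ?TuZ in h11.
have h12 := hRTT i2 i1 i3 i3 (p + eta) (q + eta) z.
move: h12 => /(congr1 (fun t => (Tu Tc i1 i1 p (Tu Tc i2 i1 q t)))) h12.
rewrite ?TuD ?TuZ in h12.
apply: (@scale_cancel _ _ (1)); first exact: oner_neq0.
lazymatch type of h1 with ?L1 = ?R1 =>
lazymatch type of h2 with ?L2 = ?R2 =>
lazymatch type of h3 with ?L3 = ?R3 =>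
lazymatch type of h4 with ?L4 = ?R4 =>
lazymatch type of h5 with ?L5 = ?R5 =>
lazymatch type of h6 with ?L6 = ?R6 =>
lazymatch type of h7 with ?L7 = ?R7 =>
lazymatch type of h8 with ?L8 = ?R8 =>
lazymatch type of h9 with ?L9 = ?R9 =>
lazymatch type of h10 with ?L10 = ?R10 =>
lazymatch type of h11 with ?L11 = ?R11 =>
lazymatch type of h12 with ?L12 = ?R12 =>
  have E : (1) *: (((q - p) *: (Tu Tc i1 i1 p (qminor Tc eta i1 i2 i1 i3 q (Tu Tc i2 i3 (p + eta) z)) - Tu Tc i2 i1 p (qminor Tc eta i1 i2 i1 i3 q (Tu Tc i1 i3 (p + eta) z))) + eta *: (Tu Tc i1 i1 p (qminor Tc eta i1 i2 i1 i3 q (Tu Tc i2 i3 (p + eta) z)) - Tu Tc i2 i1 p (qminor Tc eta i1 i2 i1 i3 q (Tu Tc i1 i3 (p + eta) z)))) - ((q - p + eta) *: (Tu Tc i1 i1 q (qminor Tc eta i1 i2 i1 i3 p (Tu Tc i2 i3 (q + eta) z)) - Tu Tc i2 i1 q (qminor Tc eta i1 i2 i1 i3 p (Tu Tc i1 i3 (q + eta) z))))) = (- (1%:R)) *: (L1 - R1) + ((1%:R)) *: (L2 - R2) + (- (1%:R)) *: (L3 - R3) + ((1%:R)) *: (L4 - R4) + (- (2%:R)) *: (L5 - R5) + (- (1%:R)) *: (L6 - R6) + ((2%:R)) *: (L7 - R7) + ((2%:R)) *: (L8 - R8) + ((1%:R)) *: (L9 - R9) + (- (2%:R)) *: (L10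 - R10) + ((1%:R)) *: (L11 - R11) + (- (1%:R)) *: (L12 - R12);
  [ by rewrite /qminor ?TuD ?TuN ?TuZ; set s0 := (p + eta); set s1 := (q + eta); mod_solve R[i] | ]
 end end end end end end end end end end end end.
apply: (etrans E); exact: (add00 (add00 (add00 (add00 (add00 (add00 (add00 (add00 (add00 (add00 (add00 (z1 _ h1) (z1 _ h2)) (z1 _ h3)) (z1 _ h4)) (z1 _ h5)) (z1 _ h6)) (z1 _ h7)) (z1 _ h8)) (z1 _ h9)) (z1 _ h10)) (z1 _ h11)) (z1 _ h12)).
Qed.

Lemma relBp_12 p q z : ((q - p) *: (Tu Tc i1 i2 p (qminor Tc eta i1 i2 i1 i3 q (Tu Tc i2 i3 (p + eta) z)) - Tu Tc i2 i2 p (qminor Tc eta i1 i2 i1 i3 q (Tu Tc i1 i3 (p + eta) z))) + eta *: (Tu Tc i1 i1 p (qminor Tc eta i1 i2 i2 i3 q (Tu Tc i2 i3 (p + eta) z)) - Tu Tc i2 i1 p (qminor Tc eta i1 i2 i2 i3 q (Tu Tc i1 i3 (p + eta) z)))) = ((q - p + eta) *: (Tu Tc i1 i1 q (qminor Tc eta i1 i2 i2 i3 p (Tu Tc i2 i3 (q + eta) z)) - Tu Tc i2 i1 q (qminor Tc eta i1 i2 i2 i3 p (Tu Tc i1 i3 (q + eta) z)))).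
Proof.
idtac.
have h1 := hRTT i1 i2 i3 i3 (p + eta) (q + eta) z.
move: h1 => /(congr1 (fun t => (Tu Tc i2 i1 p (Tu Tc i1 i2 q t)))) h1.
rewrite ?TuD ?TuZ in h1.
have h2 := hRTT i1 i2 i2 i1 q p (Tu Tc i2 i3 (q + eta) (Tu Tc i1 i3 (p + eta) z)).
rewrite ?TuD ?TuZ in h2.
have h3 := hRTT i1 i2 i2 i1 q p (Tu Tc i2 i3 (p + eta) (Tu Tc i1 i3 (q + eta) z)).
rewrite ?TuD ?TuZ in h3.
have h4 := hRTT i1 i2 i3 i3 (q + eta) (p + eta) z.
move: h4 => /(congr1 (fun t => (Tu Tc i1 i2 q (Tu Tc i2 i1 p t)))) h4.
rewrite ?TuD ?TuZ in h4.
have h5 := hRTT i1 i2 i3 i3 (p + eta) (q + eta) z.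
move: h5 => /(congr1 (fun t => (Tu Tc i1 i2 q (Tu Tc i2 i1 p t)))) h5.
rewrite ?TuD ?TuZ in h5.
have h6 := hRTT i2 i1 i1 i2 p q (Tu Tc i1 i3 (q + eta) (Tu Tc i2 i3 (p + eta) z)).
rewrite ?TuD ?TuZ in h6.
have h7 := hRTT i1 i2 i2 i1 q p (Tu Tc i1 i3 (p + eta) (Tu Tc i2 i3 (q + eta) z)).
rewrite ?TuD ?TuZ in h7.
have h8 := hRTT i2 i1 i3 i3 (p + eta) (q + eta) z.
move: h8 => /(congr1 (fun t => (Tu Tc i1 i1 q (Tu Tc i2 i2 p t)))) h8.
rewrite ?TuD ?TuZ in h8.
have h9 := hRTT i1 i2 i1 i2 q p (Tu Tc i2 i3 (q + eta) (Tu Tc i1 i3 (p + eta) z)).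
rewrite ?TuD ?TuZ in h9.
have h10 := hRTT i1 i2 i3 i3 (q + eta) (p + eta) z.
move: h10 => /(congr1 (fun t => (Tu Tc i1 i1 q (Tu Tc i2 i2 p t)))) h10.
rewrite ?TuD ?TuZ in h10.
have h11 := hRTT i1 i2 i3 i3 (p + eta) (q + eta) z.
move: h11 => /(congr1 (fun t => (Tu Tc i1 i1 q (Tu Tc i2 i2 p t)))) h11.
rewrite ?TuD ?TuZ in h11.
have h12 := hRTT i1 i2 i3 i3 (q + eta) (p + eta) z.
move: h12 => /(congr1 (fun t => (Tu Tc i2 i1 p (Tu Tc i1 i2 q t)))) h12.
rewrite ?TuD ?TuZ in h12.
have h13 := hRTT i1 i2 i3 i3 (p + eta) (q + eta) z.
move: h13 => /(congr1 (fun t => (Tu Tc i2 i1 q (Tu Tc i1 i2 p t)))) h13.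
rewrite ?TuD ?TuZ in h13.
have h14 := hRTT i1 i2 i2 i1 p q (Tu Tc i2 i3 (q + eta) (Tu Tc i1 i3 (p + eta) z)).
rewrite ?TuD ?TuZ in h14.
have h15 := hRTT i1 i2 i2 i1 p q (Tu Tc i2 i3 (p + eta) (Tu Tc i1 i3 (q + eta) z)).
rewrite ?TuD ?TuZ in h15.
have h16 := hRTT i1 i2 i3 i3 (q + eta) (p + eta) z.
move: h16 => /(congr1 (fun t => (Tu Tc i1 i2 p (Tu Tc i2 i1 q t)))) h16.
rewrite ?TuD ?TuZ in h16.
have h17 := hRTT i1 i2 i3 i3 (p + eta) (q + eta) z.
move: h17 => /(congr1 (fun t => (Tu Tc i1 i2 p (Tu Tc i2 i1 q t)))) h17.
rewrite ?TuD ?TuZ in h17.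
have h18 := hRTT i1 i2 i2 i1 p q (Tu Tc i1 i3 (p + eta) (Tu Tc i2 i3 (q + eta) z)).
rewrite ?TuD ?TuZ in h18.
have h19 := hRTT i2 i2 i3 i3 (q + eta) (p + eta) z.
move: h19 => /(congr1 (fun t => (Tu Tc i1 i1 q (Tu Tc i1 i2 p t)))) h19.
rewrite ?TuD ?TuZ in h19.
have h20 := hRTT i1 i1 i3 i3 (q + eta) (p + eta) z.
move: h20 => /(congr1 (fun t => (Tu Tc i2 i1 q (Tu Tc i2 i2 p t)))) h20.
rewrite ?TuD ?TuZ in h20.
have h21 := hRTT i1 i1 i1 i2 q p (Tu Tc i2 i3 (q + eta) (Tu Tc i2 i3 (p + eta) z)).
rewrite ?TuD ?TuZ in h21.
have h22 := hRTT i2 i2 i1 i2 q p (Tu Tc i1 i3 (q + eta) (Tu Tc i1 i3 (p + eta) z)).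
rewrite ?TuD ?TuZ in h22.
apply: (@scale_cancel _ _ (1)); first exact: oner_neq0.
lazymatch type of h1 with ?L1 = ?R1 =>
lazymatch type of h2 with ?L2 = ?R2 =>
lazymatch type of h3 with ?L3 = ?R3 =>
lazymatch type of h4 with ?L4 = ?R4 =>
lazymatch type of h5 with ?L5 = ?R5 =>
lazymatch type of h6 with ?L6 = ?R6 =>
lazymatch type of h7 with ?L7 = ?R7 =>
lazymatch type of h8 with ?L8 = ?R8 =>
lazymatch type of h9 with ?L9 = ?R9 =>
lazymatch type of h10 with ?L10 = ?R10 =>
lazymatch type of h11 with ?L11 = ?R11 =>
lazymatch type of h12 with ?L12 = ?R12 =>
lazymatch type of h13 with ?L13 = ?R13 =>
lazymatch type of h14 with ?L14 = ?R14 =>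
lazymatch type of h15 with ?L15 = ?R15 =>
lazymatch type of h16 with ?L16 = ?R16 =>
lazymatch type of h17 with ?L17 = ?R17 =>
lazymatch type of h18 with ?L18 = ?R18 =>
lazymatch type of h19 with ?L19 = ?R19 =>
lazymatch type of h20 with ?L20 = ?R20 =>
lazymatch type of h21 with ?L21 = ?R21 =>
lazymatch type of h22 with ?L22 = ?R22 =>
  have E : (1) *: (((q - p) *: (Tu Tc i1 i2 p (qminor Tc eta i1 i2 i1 i3 q (Tu Tc i2 i3 (p + eta) z)) - Tu Tc i2 i2 p (qminor Tc eta i1 i2 i1 i3 q (Tu Tc i1 i3 (p + eta) z))) + eta *: (Tu Tc i1 i1 p (qminor Tc eta i1 i2 i2 i3 q (Tu Tc i2 i3 (p + eta) z)) - Tu Tc i2 i1 p (qminor Tc eta i1 i2 i2 i3 q (Tu Tc i1 i3 (p + eta) z)))) - ((q - p + eta) *: (Tu Tc i1 i1 q (qminor Tc eta i1 i2 i2 i3 p (Tu Tc i2 i3 (q + eta) z)) - Tu Tc i2 i1 q (qminor Tc eta i1 i2 i2 i3 p (Tu Tc i1 i3 (q + eta) z))))) = (- (1%:R)) *: (L1 - R1) + (- (1%:R)) *: (L2 - R2) + ((1%:R)) *: (L3 - R3) + ((1%:R)) *: (L4 - R4) + ((1%:R)) *: (L5 - R5) + (- (1%:R)) *: (L6 - R6) + ((1%:R)) *: (L7 - R7) + ((1%:R)) *: (L8 - R8) + ((1%:R)) *: (L9 - R9) + (- (1%:R)) *: (L10 - R10) + (- (1%:R)) *: (L11 - R11) +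 (- (1%:R)) *: (L12 - R12) + ((1%:R)) *: (L13 - R13) + (- (1%:R)) *: (L14 - R14) + ((1%:R)) *: (L15 - R15) + (- (1%:R)) *: (L16 - R16) + (- (1%:R)) *: (L17 - R17) + ((1%:R)) *: (L18 - R18) + ((1%:R)) *: (L19 - R19) + ((1%:R)) *: (L20 - R20) + (- (1%:R)) *: (L21 - R21) + (- (1%:R)) *: (L22 - R22);
  [ by rewrite /qminor ?TuD ?TuN ?TuZ; set s0 := (p + eta); set s1 := (q + eta); mod_solve R[i] | ]
 end end end end end end end end end end end end end end end end end end end end end end.
apply: (etrans E); exact: (add00 (add00 (add00 (add00 (add00 (add00 (add00 (add00 (add00 (add00 (add00 (add00 (add00 (add00 (add00 (add00 (add00 (add00 (add00 (add00 (add00 (z1 _ h1) (z1 _ h2)) (z1 _ h3)) (z1 _ h4)) (z1 _ h5)) (z1 _ h6)) (z1 _ h7)) (z1 _ h8)) (z1 _ h9)) (z1 _ h10)) (z1 _ h11)) (z1 _ h12)) (z1 _ h13)) (z1 _ h14)) (z1 _ h15)) (z1 _ h16)) (z1 _ h17)) (z1 _ h18)) (z1 _ h19)) (z1 _ h20)) (z1 _ h21)) (z1 _ h22)).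
Qed.

Lemma relBp_21 p q z : ((q - p) *: (Tu Tc i1 i1 p (qminor Tc eta i1 i2 i2 i3 q (Tu Tc i2 i3 (p + eta) z)) - Tu Tc i2 i1 p (qminor Tc eta i1 i2 i2 i3 q (Tu Tc i1 i3 (p + eta) z))) + eta *: (Tu Tc i1 i2 p (qminor Tc eta i1 i2 i1 i3 q (Tu Tc i2 i3 (p + eta) z)) - Tu Tc i2 i2 p (qminor Tc eta i1 i2 i1 i3 q (Tu Tc i1 i3 (p + eta) z)))) = ((q - p + eta) *: (Tu Tc i1 i2 q (qminor Tc eta i1 i2 i1 i3 p (Tu Tc i2 i3 (q + eta) z)) - Tu Tc i2 i2 q (qminor Tc eta i1 i2 i1 i3 p (Tu Tc i1 i3 (q + eta) z)))).
Proof.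
idtac.
have h1 := hRTT i2 i1 i2 i1 p q (Tu Tc i1 i3 (p + eta) (Tu Tc i2 i3 (q + eta) z)).
rewrite ?TuD ?TuZ in h1.
have h2 := hRTT i2 i1 i3 i3 (p + eta) (q + eta) z.
move: h2 => /(congr1 (fun t => (Tu Tc i1 i2 p (Tu Tc i2 i1 q t)))) h2.
rewrite ?TuD ?TuZ in h2.
have h3 := hRTT i1 i1 i2 i1 p q (Tu Tc i2 i3 (p + eta) (Tu Tc i2 i3 (q + eta) z)).
rewrite ?TuD ?TuZ in h3.
have h4 := hRTT i2 i2 i3 i3 (p + eta) (q + eta) z.
move: h4 => /(congr1 (fun t => (Tu Tc i1 i2 p (Tu Tc i1 i1 q t)))) h4.
rewrite ?TuD ?TuZ in h4.
have h5 := hRTT i2 i2 i2 i1 p q (Tu Tc i1 i3 (p + eta) (Tu Tc i1 i3 (q + eta) z)).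
rewrite ?TuD ?TuZ in h5.
have h6 := hRTT i1 i1 i3 i3 (p + eta) (q + eta) z.
move: h6 => /(congr1 (fun t => (Tu Tc i2 i2 p (Tu Tc i2 i1 q t)))) h6.
rewrite ?TuD ?TuZ in h6.
have h7 := hRTT i2 i1 i1 i2 p q (Tu Tc i1 i3 (q + eta) (Tu Tc i2 i3 (p + eta) z)).
rewrite ?TuD ?TuZ in h7.
have h8 := hRTT i2 i1 i1 i2 p q (Tu Tc i1 i3 (p + eta) (Tu Tc i2 i3 (q + eta) z)).
rewrite ?TuD ?TuZ in h8.
have h9 := hRTT i2 i1 i3 i3 (p + eta) (q + eta) z.
move: h9 => /(congr1 (fun t => (Tu Tc i1 i1 p (Tu Tc i2 i2 q t)))) h9.
rewrite ?TuD ?TuZ in h9.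
have h10 := hRTT i2 i1 i3 i3 (p + eta) (q + eta) z.
move: h10 => /(congr1 (fun t => (Tu Tc i1 i1 q (Tu Tc i2 i2 p t)))) h10.
rewrite ?TuD ?TuZ in h10.
have h11 := hRTT i1 i2 i1 i2 p q (Tu Tc i2 i3 (p + eta) (Tu Tc i1 i3 (q + eta) z)).
rewrite ?TuD ?TuZ in h11.
have h12 := hRTT i1 i2 i2 i1 q p (Tu Tc i2 i3 (q + eta) (Tu Tc i1 i3 (p + eta) z)).
rewrite ?TuD ?TuZ in h12.
have h13 := hRTT i1 i2 i2 i1 q p (Tu Tc i2 i3 (p + eta) (Tu Tc i1 i3 (q + eta) z)).
rewrite ?TuD ?TuZ in h13.
have h14 := hRTT i1 i2 i3 i3 (q + eta) (p + eta) z.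
move: h14 => /(congr1 (fun t => (Tu Tc i1 i2 q (Tu Tc i2 i1 p t)))) h14.
rewrite ?TuD ?TuZ in h14.
have h15 := hRTT i1 i2 i3 i3 (p + eta) (q + eta) z.
move: h15 => /(congr1 (fun t => (Tu Tc i1 i2 q (Tu Tc i2 i1 p t)))) h15.
rewrite ?TuD ?TuZ in h15.
have h16 := hRTT i1 i2 i2 i1 q p (Tu Tc i1 i3 (p + eta) (Tu Tc i2 i3 (q + eta) z)).
rewrite ?TuD ?TuZ in h16.
have h17 := hRTT i2 i2 i3 i3 (p + eta) (q + eta) z.
move: h17 => /(congr1 (fun t => (Tu Tc i1 i1 p (Tu Tc i1 i2 q t)))) h17.
rewrite ?TuD ?TuZ in h17.
have h18 := hRTT i2 i2 i3 i3 (q + eta) (p + eta) z.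
move: h18 => /(congr1 (fun t => (Tu Tc i1 i1 q (Tu Tc i1 i2 p t)))) h18.
rewrite ?TuD ?TuZ in h18.
have h19 := hRTT i1 i1 i1 i2 p q (Tu Tc i2 i3 (p + eta) (Tu Tc i2 i3 (q + eta) z)).
rewrite ?TuD ?TuZ in h19.
have h20 := hRTT i1 i1 i3 i3 (p + eta) (q + eta) z.
move: h20 => /(congr1 (fun t => (Tu Tc i2 i1 p (Tu Tc i2 i2 q t)))) h20.
rewrite ?TuD ?TuZ in h20.
have h21 := hRTT i1 i1 i3 i3 (q + eta) (p + eta) z.
move: h21 => /(congr1 (fun t => (Tu Tc i2 i1 q (Tu Tc i2 i2 p t)))) h21.
rewrite ?TuD ?TuZ in h21.
have h22 := hRTT i2 i2 i1 i2 p q (Tu Tc i1 i3 (p + eta) (Tu Tc i1 i3 (q + eta) z)).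
rewrite ?TuD ?TuZ in h22.
have h23 := hRTT i1 i2 i3 i3 (p + eta) (q + eta) z.
move: h23 => /(congr1 (fun t => (Tu Tc i2 i2 p (Tu Tc i1 i1 q t)))) h23.
rewrite ?TuD ?TuZ in h23.
have h24 := hRTT i1 i2 i1 i2 q p (Tu Tc i2 i3 (q + eta) (Tu Tc i1 i3 (p + eta) z)).
rewrite ?TuD ?TuZ in h24.
have h25 := hRTT i1 i2 i3 i3 (q + eta) (p + eta) z.
move: h25 => /(congr1 (fun t => (Tu Tc i1 i1 q (Tu Tc i2 i2 p t)))) h25.
rewrite ?TuD ?TuZ in h25.
have h26 := hRTT i1 i2 i3 i3 (p + eta) (q + eta) z.
move: h26 => /(congr1 (fun t => (Tu Tc i1 i1 q (Tu Tc i2 i2 p t)))) h26.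
rewrite ?TuD ?TuZ in h26.
have h27 := hRTT i1 i2 i3 i3 (q + eta) (p + eta) z.
move: h27 => /(congr1 (fun t => (Tu Tc i2 i1 p (Tu Tc i1 i2 q t)))) h27.
rewrite ?TuD ?TuZ in h27.
have h28 := hRTT i1 i2 i3 i3 (p + eta) (q + eta) z.
move: h28 => /(congr1 (fun t => (Tu Tc i2 i1 p (Tu Tc i1 i2 q t)))) h28.
rewrite ?TuD ?TuZ in h28.
have h29 := hRTT i1 i2 i3 i3 (p + eta) (q + eta) z.
move: h29 => /(congr1 (fun t => (Tu Tc i2 i1 q (Tu Tc i1 i2 p t)))) h29.
rewrite ?TuD ?TuZ in h29.
have h30 := hRTT i1 i2 i2 i1 p q (Tu Tc i2 i3 (q + eta) (Tu Tc i1 i3 (p + eta) z)).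
rewrite ?TuD ?TuZ in h30.
have h31 := hRTT i1 i2 i3 i3 (q + eta) (p + eta) z.
move: h31 => /(congr1 (fun t => (Tu Tc i1 i2 p (Tu Tc i2 i1 q t)))) h31.
rewrite ?TuD ?TuZ in h31.
have h32 := hRTT i1 i2 i3 i3 (p + eta) (q + eta) z.
move: h32 => /(congr1 (fun t => (Tu Tc i1 i2 p (Tu Tc i2 i1 q t)))) h32.
rewrite ?TuD ?TuZ in h32.
have h33 := hRTT i1 i2 i2 i1 p q (Tu Tc i1 i3 (p + eta) (Tu Tc i2 i3 (q + eta) z)).
rewrite ?TuD ?TuZ in h33.
have h34 := hRTT i1 i1 i1 i2 q p (Tu Tc i2 i3 (q + eta) (Tu Tc i2 i3 (p + eta) z)).
rewrite ?TuD ?TuZ in h34.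
have h35 := hRTT i2 i2 i1 i2 q p (Tu Tc i1 i3 (q + eta) (Tu Tc i1 i3 (p + eta) z)).
rewrite ?TuD ?TuZ in h35.
apply: (@scale_cancel _ _ (1)); first exact: oner_neq0.
lazymatch type of h1 with ?L1 = ?R1 =>
lazymatch type of h2 with ?L2 = ?R2 =>
lazymatch type of h3 with ?L3 = ?R3 =>
lazymatch type of h4 with ?L4 = ?R4 =>
lazymatch type of h5 with ?L5 = ?R5 =>
lazymatch type of h6 with ?L6 = ?R6 =>
lazymatch type of h7 with ?L7 = ?R7 =>
lazymatch type of h8 with ?L8 = ?R8 =>
lazymatch type of h9 with ?L9 = ?R9 =>
lazymatch type of h10 with ?L10 = ?R10 =>
lazymatch type of h11 with ?L11 = ?R11 =>
lazymatch type of h12 with ?L12 = ?R12 =>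
lazymatch type of h13 with ?L13 = ?R13 =>
lazymatch type of h14 with ?L14 = ?R14 =>
lazymatch type of h15 with ?L15 = ?R15 =>
lazymatch type of h16 with ?L16 = ?R16 =>
lazymatch type of h17 with ?L17 = ?R17 =>
lazymatch type of h18 with ?L18 = ?R18 =>
lazymatch type of h19 with ?L19 = ?R19 =>
lazymatch type of h20 with ?L20 = ?R20 =>
lazymatch type of h21 with ?L21 = ?R21 =>
lazymatch type of h22 with ?L22 = ?R22 =>
lazymatch type of h23 with ?L23 = ?R23 =>
lazymatch type of h24 with ?L24 = ?R24 =>
lazymatch type of h25 with ?L25 = ?R25 =>
lazymatch type of h26 with ?L26 = ?R26 =>
lazymatch type of h27 with ?L27 = ?R27 =>
lazymatch type of h28 with ?L28 = ?R28 =>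
lazymatch type of h29 with ?L29 = ?R29 =>
lazymatch type of h30 with ?L30 = ?R30 =>
lazymatch type of h31 with ?L31 = ?R31 =>
lazymatch type of h32 with ?L32 = ?R32 =>
lazymatch type of h33 with ?L33 = ?R33 =>
lazymatch type of h34 with ?L34 = ?R34 =>
lazymatch type of h35 with ?L35 = ?R35 =>
  have E : (1) *: (((q - p) *: (Tu Tc i1 i1 p (qminor Tc eta i1 i2 i2 i3 q (Tu Tc i2 i3 (p + eta) z)) - Tu Tc i2 i1 p (qminor Tc eta i1 i2 i2 i3 q (Tu Tc i1 i3 (p + eta) z))) + eta *: (Tu Tc i1 i2 p (qminor Tc eta i1 i2 i1 i3 q (Tu Tc i2 i3 (p + eta) z)) - Tu Tc i2 i2 p (qminor Tc eta i1 i2 i1 i3 q (Tu Tc i1 i3 (p + eta) z)))) - ((q - p + eta) *: (Tu Tc i1 i2 q (qminor Tc eta i1 i2 i1 i3 p (Tu Tc i2 i3 (q + eta) z)) - Tu Tc i2 i2 q (qminor Tc eta i1 i2 i1 i3 p (Tu Tc i1 i3 (q + eta) z))))) = (- (1%:R)) *: (L1 - R1) + ((1%:R)) *: (L2 - R2) + ((1%:R)) *: (L3 - R3) + (- (1%:R)) *: (L4 - R4) + ((1%:R)) *: (L5 - R5) + (- (1%:R)) *: (L6 - R6) + (- (1%:R)) *: (L7 - R7) + ((1%:R)) *: (L8 - R8) + (- (1%:R)) *: (L9 - R9) + ((1%:R)) *: (L10 - R10) + ((1%:R)) *: (L11 - R11) + (- (1%:R)) *: (L12 - R12) + ((1%:R))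 *: (L13 - R13) + ((1%:R)) *: (L14 - R14) + ((1%:R)) *: (L15 - R15) + ((1%:R)) *: (L16 - R16) + ((1%:R)) *: (L17 - R17) + ((1%:R)) *: (L18 - R18) + (- (1%:R)) *: (L19 - R19) + ((1%:R)) *: (L20 - R20) + ((1%:R)) *: (L21 - R21) + (- (1%:R)) *: (L22 - R22) + ((1%:R)) *: (L23 - R23) + ((1%:R)) *: (L24 - R24) + (- (1%:R)) *: (L25 - R25) + (- (1%:R)) *: (L26 - R26) + (- (1%:R)) *: (L27 - R27) + (- (2%:R)) *: (L28 - R28) + ((1%:R)) *: (L29 - R29) + (- (1%:R)) *: (L30 - R30) + (- (1%:R)) *: (L31 - R31) + (- (1%:R)) *: (L32 - R32) + ((1%:R)) *: (L33 - R33) + (- (1%:R)) *: (L34 - R34) + (- (1%:R)) *: (L35 - R35);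
  [ by rewrite /qminor ?TuD ?TuN ?TuZ; set s0 := (p + eta); set s1 := (q + eta); mod_solve R[i] | ]
 end end end end end end end end end end end end end end end end end end end end end end end end end end end end end end end end end end end.
apply: (etrans E); exact: (add00 (add00 (add00 (add00 (add00 (add00 (add00 (add00 (add00 (add00 (add00 (add00 (add00 (add00 (add00 (add00 (add00 (add00 (add00 (add00 (add00 (add00 (add00 (add00 (add00 (add00 (add00 (add00 (add00 (add00 (add00 (add00 (add00 (add00 (z1 _ h1) (z1 _ h2)) (z1 _ h3)) (z1 _ h4)) (z1 _ h5)) (z1 _ h6)) (z1 _ h7)) (z1 _ h8)) (z1 _ h9)) (z1 _ h10)) (z1 _ h11)) (z1 _ h12)) (z1 _ h13)) (z1 _ h14)) (z1 _ h15)) (z1 _ h16)) (z1 _ h17)) (z1 _ h18)) (z1 _ h19)) (z1 _ h20)) (z1 _ h21)) (z1 _ h22)) (z1 _ h23)) (z1 _ h24)) (z1 _ h25)) (z1 _ h26)) (z1 _ h27)) (z1 _ h28)) (z1 _ h29)) (z1 _ h30)) (z1 _ h31)) (z1 _ h32)) (z1 _ h33)) (z1 _ h34)) (z1 _ h35)).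
Qed.

Lemma relBp_22 p q z : ((q - p) *: (Tu Tc i1 i2 p (qminor Tc eta i1 i2 i2 i3 q (Tu Tc i2 i3 (p + eta) z)) - Tu Tc i2 i2 p (qminor Tc eta i1 i2 i2 i3 q (Tu Tc i1 i3 (p + eta) z))) + eta *: (Tu Tc i1 i2 p (qminor Tc eta i1 i2 i2 i3 q (Tu Tc i2 i3 (p + eta) z)) - Tu Tc i2 i2 p (qminor Tc eta i1 i2 i2 i3 q (Tu Tc i1 i3 (p + eta) z)))) = ((q - p + eta) *: (Tu Tc i1 i2 q (qminor Tc eta i1 i2 i2 i3 p (Tu Tc i2 i3 (q + eta) z)) - Tu Tc i2 i2 q (qminor Tc eta i1 i2 i2 i3 p (Tu Tc i1 i3 (q + eta) z)))).
Proof.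
idtac.
have h1 := hRTT i1 i1 i2 i2 q p (Tu Tc i2 i3 (p + eta) (Tu Tc i2 i3 (q + eta) z)).
rewrite ?TuD ?TuZ in h1.
have h2 := hRTT i2 i2 i3 i3 (q + eta) (p + eta) z.
move: h2 => /(congr1 (fun t => (Tu Tc i1 i2 p (Tu Tc i1 i2 q t)))) h2.
rewrite ?TuD ?TuZ in h2.
have h3 := hRTT i2 i2 i2 i2 q p (Tu Tc i1 i3 (p + eta) (Tu Tc i1 i3 (q + eta) z)).
rewrite ?TuD ?TuZ in h3.
have h4 := hRTT i1 i1 i3 i3 (q + eta) (p + eta) z.
move: h4 => /(congr1 (fun t => (Tu Tc i2 i2 p (Tu Tc i2 i2 q t)))) h4.
rewrite ?TuD ?TuZ in h4.
have h5 := hRTT i2 i1 i2 i2 p q (Tu Tc i1 i3 (q + eta) (Tu Tc i2 i3 (p + eta) z)).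
rewrite ?TuD ?TuZ in h5.
have h6 := hRTT i1 i2 i3 i3 (p + eta) (q + eta) z.
move: h6 => /(congr1 (fun t => (Tu Tc i2 i2 p (Tu Tc i1 i2 q t)))) h6.
rewrite ?TuD ?TuZ in h6.
have h7 := hRTT i2 i1 i3 i3 (p + eta) (q + eta) z.
move: h7 => /(congr1 (fun t => (Tu Tc i1 i2 q (Tu Tc i2 i2 p t)))) h7.
rewrite ?TuD ?TuZ in h7.
have h8 := hRTT i1 i2 i2 i2 q p (Tu Tc i2 i3 (p + eta) (Tu Tc i1 i3 (q + eta) z)).
rewrite ?TuD ?TuZ in h8.
have h9 := hRTT i1 i2 i2 i2 p q (Tu Tc i2 i3 (p + eta) (Tu Tc i1 i3 (q + eta) z)).
rewrite ?TuD ?TuZ in h9.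
have h10 := hRTT i1 i2 i3 i3 (q + eta) (p + eta) z.
move: h10 => /(congr1 (fun t => (Tu Tc i2 i2 p (Tu Tc i1 i2 q t)))) h10.
rewrite ?TuD ?TuZ in h10.
have h11 := hRTT i2 i1 i2 i2 p q (Tu Tc i1 i3 (p + eta) (Tu Tc i2 i3 (q + eta) z)).
rewrite ?TuD ?TuZ in h11.
have h12 := hRTT i2 i1 i3 i3 (p + eta) (q + eta) z.
move: h12 => /(congr1 (fun t => (Tu Tc i1 i2 p (Tu Tc i2 i2 q t)))) h12.
rewrite ?TuD ?TuZ in h12.
apply: (@scale_cancel _ _ (1)); first exact: oner_neq0.
lazymatch type of h1 with ?L1 = ?R1 =>
lazymatch type of h2 with ?L2 = ?R2 =>
lazymatch type of h3 with ?L3 = ?R3 =>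
lazymatch type of h4 with ?L4 = ?R4 =>
lazymatch type of h5 with ?L5 = ?R5 =>
lazymatch type of h6 with ?L6 = ?R6 =>
lazymatch type of h7 with ?L7 = ?R7 =>
lazymatch type of h8 with ?L8 = ?R8 =>
lazymatch type of h9 with ?L9 = ?R9 =>
lazymatch type of h10 with ?L10 = ?R10 =>
lazymatch type of h11 with ?L11 = ?R11 =>
lazymatch type of h12 with ?L12 = ?R12 =>
  have E : (1) *: (((q - p) *: (Tu Tc i1 i2 p (qminor Tc eta i1 i2 i2 i3 q (Tu Tc i2 i3 (p + eta) z)) - Tu Tc i2 i2 p (qminor Tc eta i1 i2 i2 i3 q (Tu Tc i1 i3 (p + eta) z))) + eta *: (Tu Tc i1 i2 p (qminor Tc eta i1 i2 i2 i3 q (Tu Tc i2 i3 (p + eta) z)) - Tu Tc i2 i2 p (qminor Tc eta i1 i2 i2 i3 q (Tu Tc i1 i3 (p + eta) z)))) - ((q - p + eta) *: (Tu Tc i1 i2 q (qminor Tc eta i1 i2 i2 i3 p (Tu Tc i2 i3 (q + eta) z)) - Tu Tc i2 i2 q (qminor Tc eta i1 i2 i2 i3 p (Tu Tc i1 i3 (q + eta) z))))) = (- (1%:R)) *: (L1 - R1) + ((1%:R)) *: (L2 - R2) + (- (1%:R)) *: (L3 - R3) + ((1%:R)) *: (L4 - R4) + (- (2%:R)) *: (L5 - R5) + (- (1%:R)) *: (L6 - R6) + ((2%:R)) *: (L7 - R7) + ((2%:R)) *: (L8 - R8) + ((1%:R)) *: (L9 - R9) + (- (2%:R)) *: (L10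 - R10) + ((1%:R)) *: (L11 - R11) + (- (1%:R)) *: (L12 - R12);
  [ by rewrite /qminor ?TuD ?TuN ?TuZ; set s0 := (p + eta); set s1 := (q + eta); mod_solve R[i] | ]
 end end end end end end end end end end end end.
apply: (etrans E); exact: (add00 (add00 (add00 (add00 (add00 (add00 (add00 (add00 (add00 (add00 (add00 (z1 _ h1) (z1 _ h2)) (z1 _ h3)) (z1 _ h4)) (z1 _ h5)) (z1 _ h6)) (z1 _ h7)) (z1 _ h8)) (z1 _ h9)) (z1 _ h10)) (z1 _ h11)) (z1 _ h12)).
Qed.
Lemma commC k b u w z : (k == i1) || (k == i2) -> (b == i1) || (b == i2) -> u != w ->
  Tu Tc k i3 u (qminor Tc eta i1 i2 b i3 w z) = qminor Tc eta i1 i2 b i3 w (Tu Tc k i3 u z).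
Proof.
move=> /orP[]/eqP-> /orP[]/eqP->;
  [exact: commC_11|exact: commC_12|exact: commC_21|exact: commC_22].
Qed.

Lemma relB a b p q z : (a == i1) || (a == i2) -> (b == i1) || (b == i2) ->
  p + eta != q -> q + eta != p ->
  (q - p) *: qminor Tc eta i1 i2 b i3 p (qminor Tc eta i1 i2 a i3 q z)
  + eta *: qminor Tc eta i1 i2 a i3 p (qminor Tc eta i1 i2 b i3 q z)
  = (q - p + eta) *: qminor Tc eta i1 i2 a i3 q (qminor Tc eta i1 i2 b i3 p z).
Proof.
move=> ha hb h1 h2.
have E1 : forall a b, (a == i1) || (a == i2) -> (b == i1) || (b == i2) ->
   qminor Tc eta i1 i2 b i3 p (qminor Tc eta i1 i2 a i3 q z) =
   Tu Tc i1 b p (qminor Tc eta i1 i2 a i3 q (Tu Tc i2 i3 (p + eta) z))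
   - Tu Tc i2 b p (qminor Tc eta i1 i2 a i3 q (Tu Tc i1 i3 (p + eta) z)).
  by move=> a' b' ha' hb'; rewrite {1}/qminor !commC.
have E3 : qminor Tc eta i1 i2 a i3 q (qminor Tc eta i1 i2 b i3 p z) =
   Tu Tc i1 a q (qminor Tc eta i1 i2 b i3 p (Tu Tc i2 i3 (q + eta) z))
   - Tu Tc i2 a q (qminor Tc eta i1 i2 b i3 p (Tu Tc i1 i3 (q + eta) z)).
  by rewrite {1}/qminor !commC.
rewrite (E1 a b) // (E1 b a) // E3.
move: ha hb => /orP[]/eqP-> /orP[]/eqP->;
  [exact: relBp_11|exact: relBp_12|exact: relBp_21|exact: relBp_22].
Qed.

Lemma qminorD a1 a2 b1 b2 x v1 v2 :
  qminor Tc eta a1 a2 b1 b2 x (v1 + v2) = qminor Tc eta a1 a2 b1 b2 x v1 + qminor Tc eta a1 a2 b1 b2 x v2.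
Proof. by rewrite /qminor !TuD opprD addrACA. Qed.
Lemma qminorZ a1 a2 b1 b2 x (s : R[i]) v :
  qminor Tc eta a1 a2 b1 b2 x (s *: v) = s *: qminor Tc eta a1 a2 b1 b2 x v.
Proof. by rewrite /qminor !TuZ scalerBr. Qed.
Lemma qminorN a1 a2 b1 b2 x v :
  qminor Tc eta a1 a2 b1 b2 x (- v) = - qminor Tc eta a1 a2 b1 b2 x v.
Proof. by rewrite -scaleN1r qminorZ scaleN1r. Qed.

Lemma BcE c u z : Bc Tc eta c u z =
  Tu Tc i2 i3 u (qminor Tc eta i1 i2 i2 i3 (u - c) z) + Tu Tc i1 i3 u (qminor Tc eta i1 i2 i1 i3 (u - c) z).
Proof. by rewrite /Bc /Umx /= TuN opprK. Qed.

Lemma Lfin c u v w : v != u - c -> u != v - c -> v - c + eta != u - c -> u - c + eta != v - c ->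
  (u - v + eta) *: (Bc Tc eta c u (Bc Tc eta c v w) - Bc Tc eta c v (Bc Tc eta c u w)) = 0.
Proof.
move=> c1 c2 c3 c4.
have cU : forall a b t, (a == i1) || (a == i2) -> (b == i1) || (b == i2) ->
  qminor Tc eta i1 i2 a i3 (u - c) (Tu Tc b i3 v t) = Tu Tc b i3 v (qminor Tc eta i1 i2 a i3 (u - c) t).
  by move=> a b t ha hb; rewrite commC.
have cV : forall a b t, (a == i1) || (a == i2) -> (b == i1) || (b == i2) ->
  qminor Tc eta i1 i2 a i3 (v - c) (Tu Tc b i3 u t) = Tu Tc b i3 u (qminor Tc eta i1 i2 a i3 (v - c) t).
  by move=> a b t ha hb; rewrite commC.
rewrite !BcE !qminorD (lock (@qminor R W M)) !TuD -lock !cU // !cV //.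
have hA11 := hRTT i1 i1 i3 i3 u v (qminor Tc eta i1 i2 i1 i3 (v - c) (qminor Tc eta i1 i2 i1 i3 (u - c) w)).
have hA12 := hRTT i1 i2 i3 i3 u v (qminor Tc eta i1 i2 i2 i3 (v - c) (qminor Tc eta i1 i2 i1 i3 (u - c) w)).
have hA21 := hRTT i2 i1 i3 i3 u v (qminor Tc eta i1 i2 i1 i3 (v - c) (qminor Tc eta i1 i2 i2 i3 (u - c) w)).
have hA22 := hRTT i2 i2 i3 i3 u v (qminor Tc eta i1 i2 i2 i3 (v - c) (qminor Tc eta i1 i2 i2 i3 (u - c) w)).
have hB11 := @relB i1 i1 (v - c) (u - c) w (erefl _) (erefl _) c3 c4.
have hB12 := @relB i1 i2 (v - c) (u - c) w (erefl _) (erefl _) c3 c4.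
have hB21 := @relB i2 i1 (v - c) (u - c) w (erefl _) (erefl _) c3 c4.
have hB22 := @relB i2 i2 (v - c) (u - c) w (erefl _) (erefl _) c3 c4.
move: hB11 => /(congr1 (fun t => Tu Tc i1 i3 u (Tu Tc i1 i3 v t))) hB11.
move: hB12 => /(congr1 (fun t => Tu Tc i1 i3 u (Tu Tc i2 i3 v t))) hB12.
move: hB21 => /(congr1 (fun t => Tu Tc i2 i3 u (Tu Tc i1 i3 v t))) hB21.
move: hB22 => /(congr1 (fun t => Tu Tc i2 i3 u (Tu Tc i2 i3 v t))) hB22.
rewrite (lock (@qminor R W M)) ?TuD ?TuZ -lock in hB11 hB12 hB21 hB22.
lazymatch type of hA11 with ?L1 = ?R1 =>
lazymatch type of hA12 with ?L2 = ?R2 =>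
lazymatch type of hA21 with ?L3 = ?R3 =>
lazymatch type of hA22 with ?L4 = ?R4 =>
lazymatch type of hB11 with ?L5 = ?R5 =>
lazymatch type of hB12 with ?L6 = ?R6 =>
lazymatch type of hB21 with ?L7 = ?R7 =>
lazymatch type of hB22 with ?L8 = ?R8 =>
lazymatch goal with |- ?G = 0 =>
  have E : G = 1 *: (L1 - R1) + 1 *: (L2 - R2) + 1 *: (L3 - R3) + 1 *: (L4 - R4)
     + (-1) *: (L5 - R5) + (-1) *: (L6 - R6) + (-1) *: (L7 - R7) + (-1) *: (L8 - R8);
  [ by set s0 := u - c; set s1 := v - c; mod_solve R[i] | ]
end end end end end end end end end.
apply: (etrans E).
exact: (add00 (add00 (add00 (add00 (add00 (add00 (add00 (z1 _ hA11) (z1 _ hA12)) (z1 _ hA21)) (z1 _ hA22)) (z1 _ hB11)) (z1 _ hB12)) (z1 _ hB21)) (z1 _ hB22)).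
Qed.

Lemma VP_Tu a b (d : R[i]) (g : R[i] -> W) : VP g -> VP (fun x => Tu Tc a b (x + d) (g x)).
Proof.
move=> Hg.
pose F k x := (x + d) ^+ k *: Tc a b (inord k) (g x).
have HF : forall k, VP (F k).
  move=> k; apply: VP_pow; apply: VP_lin Hg => [y1 y2|s y]; [exact: linearD|exact: linearZ].
apply: VP_ext (VP_sum M.+1 HF) _ => x.
by rewrite /Tu; apply: eq_bigr => m _; rewrite /F inord_val.
Qed.
Lemma VP_TuC a b y (g : R[i] -> W) : VP g -> VP (fun x => Tu Tc a b y (g x)).
Proof. by apply: VP_lin => [y1 y2|s z]; [exact: TuD|exact: TuZ]. Qed.
Lemma VP_qm a1 a2 b1 b2 (c : R[i]) (g : R[i] -> W) : VP g ->
  VP (fun x => qminor Tc eta a1 a2 b1 b2 (x - c) (g x)).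
Proof.
move=> Hg.
have H1 := VP_Tu a1 b1 (- c) (VP_Tu a2 b2 (- c + eta) Hg).
have H2 := VP_Tu a2 b1 (- c) (VP_Tu a1 b2 (- c + eta) Hg).
by apply: VP_ext (VP_sub H1 H2) _ => x; rewrite /qminor !addrA.
Qed.
Lemma BcD c y z1 z2 : Bc Tc eta c y (z1 + z2) = Bc Tc eta c y z1 + Bc Tc eta c y z2.
Proof. by rewrite !BcE !qminorD !TuD addrACA. Qed.
Lemma BcZ c y (s : R[i]) z : Bc Tc eta c y (s *: z) = s *: Bc Tc eta c y z.
Proof. by rewrite !BcE !qminorZ !TuZ scalerDr. Qed.
Lemma VP_Bc c (g : R[i] -> W) : VP g -> VP (fun x => Bc Tc eta c x (g x)).
Proof.
move=> Hg.
have H1 := VP_Tu i2 i3 0 (VP_qm i1 i2 i2 i3 c Hg).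
have H2 := VP_Tu i1 i3 0 (VP_qm i1 i2 i1 i3 c Hg).
by apply: VP_ext (VP_add H1 H2) _ => x; rewrite BcE !addr0.
Qed.

Lemma neqH (a b x y : R[i]) : x != y -> a - b = x - y -> a != b.
Proof. by move=> H E; rewrite -subr_eq0 E subr_eq0. Qed.

Lemma main_sec c u v w : Bc Tc eta c u (Bc Tc eta c v w) = Bc Tc eta c v (Bc Tc eta c u w).
Proof.
pose f x := Bc Tc eta c x (Bc Tc eta c v w) - Bc Tc eta c v (Bc Tc eta c x w).
have Hf : VP f.
  apply: VP_sub; first exact: (VP_Bc c (VP_const _)).
  apply: VP_lin (VP_Bc c (VP_const _)) => [y1 y2|s y]; [exact: BcD|exact: BcZ].
have Hz : forall x, x \notin [:: v; v + c; v - c; v + eta; v - eta] -> f x = 0.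
  move=> x; rewrite !inE !negb_or => /and5P[h1 h2 h3 h4 h5].
  have c1 : v != x - c by apply: (neqH (x := v + c) (y := x)); [rewrite eq_sym | ring].
  have c3 : v - c + eta != x - c by apply: (neqH (x := v + eta) (y := x)); [rewrite eq_sym | ring].
  have c4 : x - c + eta != v - c by apply: (neqH (x := x) (y := v - eta)); [ | ring].
  have hL1 := @Lfin c x v w c1 h3 c3 c4.
  have hL2 := @Lfin c v x w h3 c1 c4 c3.
  have E : (2%:R * (x - v)) *: f x =
     (x - v + eta) *: (Bc Tc eta c x (Bc Tc eta c v w) - Bc Tc eta c v (Bc Tc eta c x w))
     + (v - x + eta) *: (Bc Tc eta c v (Bc Tc eta c x w) - Bc Tc eta c x (Bc Tc eta c v w)).
    by rewrite /f; mod_solve R[i].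
  move: E; rewrite hL1 hL2 addr0 => /eqP; rewrite scaler_eq0 mulf_eq0 pnatr_eq0 /=.
  by rewrite subr_eq0 (negbTE h1) /= => /eqP.
have [n Hn] := Hf.
by have := VPn_zero Hn Hz u; rewrite /f => /eqP; rewrite subr_eq0 => /eqP.
Qed.

End Main.

Unset Implicit Arguments.

Theorem proposition1 (R : realType) (eta : R[i]) (M : nat) (hM : (1 <= M)%N)
  (W : lmodType R[i]) (Tc : 'I_3 -> 'I_3 -> 'I_M.+1 -> {linear W -> W})
  (hRTT : forall (a1 a2 b1 b2 : 'I_3) (u v : R[i]) (w : W),
     (u - v) *: Tu Tc a1 b1 u (Tu Tc a2 b2 v w)
       + eta *: Tu Tc a2 b1 u (Tu Tc a1 b2 v w)
     = (u - v) *: Tu Tc a2 b2 v (Tu Tc a1 b1 u w)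
       + eta *: Tu Tc a2 b1 v (Tu Tc a1 b2 u w)) :
  forall (c u v : R[i]) (w : W),
    Bc Tc eta c u (Bc Tc eta c v w) = Bc Tc eta c v (Bc Tc eta c u w).
Proof.
move=> c u v w; exact: (main_sec hRTT).
Qed.
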